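(* For every integer $j\ge0$, $$\int_0^\infty\frac{(\pi^2+t^2)^j}{e^t-1}\sin\!\left(2j\tan^{-1}\!\left(\frac t\pi\right)\right)dt=\frac{j\,\pi^{2j+1}}{2j+1}.$$ *)

(* Defs.v *)
From Stdlib Require Import Reals Lra.
Open Scope R_scope.

Definition improper_integral_0_inf (f : R -> R) (l : R) : Prop :=
  (forall a b : R, 0 < a -> a <= b -> inhabited (Riemann_integrable f a b)) /\
  (forall eps : R, eps > 0 ->
     exists d : R, d > 0 /\
     exists M : R, forall (a b : R) (pr : Riemann_integrable f a b),
       0 < a -> a < d -> M < b -> a <= b ->
       Rabs (RiemannInt pr - l) < eps).

(* Main.v *)
Require Import Defs.
From Stdlib Require Import Reals.
From Coquelicot Require Import Coquelicot.
From Stdlib Require Import Lra Lia ZArith.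
Open Scope R_scope.


Fixpoint cs (k : nat) (t : R) : R * R :=
  match k with
  | O => (1, 0)
  | S k => (PI * fst (cs k t) - t * snd (cs k t), t * fst (cs k t) + PI * snd (cs k t))
  end.
Definition cc k t := fst (cs k t).
Definition ss k t := snd (cs k t).

Lemma cc_S k t : cc (S k) t = PI * cc k t - t * ss k t. Proof. reflexivity. Qed.
Lemma ss_S k t : ss (S k) t = t * cc k t + PI * ss k t. Proof. reflexivity. Qed.

Lemma cs_deriv k t :
  is_derive (cc k) t (- INR k * ss (pred k) t) /\ is_derive (ss k) t (INR k * cc (pred k) t).
Proof.
  revert t. induction k as [|k IH]; intro t.
  - unfold cc, ss; simpl. split; auto_derive; auto; ring.
  - assert (Ec : forall t, ex_derive (cc k) t) by (intro u; eexists; apply (IH u)).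
    assert (Es : forall t, ex_derive (ss k) t) by (intro u; eexists; apply (IH u)).
    assert (Dc : forall t, Derive (cc k) t = - INR k * ss (pred k) t) by (intro u; apply is_derive_unique, IH).
    assert (Ds : forall t, Derive (ss k) t = INR k * cc (pred k) t) by (intro u; apply is_derive_unique, IH).
    split.
    + change (cc (S k)) with (fun t0 => PI * cc k t0 - t0 * ss k t0).
      auto_derive. split; [apply Ec|split; [apply Es|exact I]].
      rewrite Dc, Ds. simpl pred. destruct k as [|k].
      * unfold ss, cc; simpl. ring.
      * rewrite ss_S. rewrite !S_INR. simpl pred. ring.
    + change (ss (S k)) with (fun t0 => t0 * cc k t0 + PI * ss k t0).
      auto_derive. split; [apply Ec|split; [apply Es|exact I]].
      rewrite Dc, Ds. simpl pred. destruct k as [|k].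
      * unfold ss, cc; simpl. ring.
      * rewrite cc_S. rewrite !S_INR. simpl pred. ring.
Qed.

Lemma PIb : 3 < PI <= 4.
Proof. pose proof PI2_3_2; pose proof PI_4; lra. Qed.

Lemma cs_at0 k : cc k 0 = PI ^ k /\ ss k 0 = 0.
Proof.
  induction k as [|k [H1 H2]]. unfold cc, ss; simpl; auto.
  rewrite cc_S, ss_S, H1, H2. simpl. split; ring.
Qed.

Lemma cs_bound1 k t : 0 <= t -> Rabs (cc k t) <= (PI + t) ^ k /\ Rabs (ss k t) <= (PI + t) ^ k.
Proof.
  intro Ht. pose proof PIb.
  induction k as [|k [H1 H2]].
  - unfold cc, ss; simpl. rewrite Rabs_R1, Rabs_R0. split; lra.
  - rewrite cc_S, ss_S. simpl.
    assert (Hp : 0 <= (PI + t) ^ k) by (apply pow_le; lra).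
    assert (t * Rabs (ss k t) <= t * (PI+t)^k) by (apply Rmult_le_compat_l; lra).
    assert (PI * Rabs (cc k t) <= PI * (PI+t)^k) by (apply Rmult_le_compat_l; lra).
    assert (t * Rabs (cc k t) <= t * (PI+t)^k) by (apply Rmult_le_compat_l; lra).
    assert (PI * Rabs (ss k t) <= PI * (PI+t)^k) by (apply Rmult_le_compat_l; lra).
    split.
    + eapply Rle_trans. apply Rabs_triang. rewrite Rabs_Ropp, !Rabs_mult, (Rabs_right PI), (Rabs_right t) by lra. lra.
    + eapply Rle_trans. apply Rabs_triang. rewrite !Rabs_mult, (Rabs_right PI), (Rabs_right t) by lra. lra.
Qed.

Lemma ss_bound k t : 0 <= t -> Rabs (ss k t) <= INR k * t * (PI + t) ^ k.
Proof.
  intro Ht. pose proof PIb.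
  induction k as [|k IH].
  - unfold ss; simpl. rewrite Rabs_R0. lra.
  - rewrite ss_S. rewrite S_INR. simpl.
    destruct (cs_bound1 k t Ht) as [H1 _].
    assert (Hp : 0 <= (PI + t) ^ k) by (apply pow_le; lra).
    assert (HI : 0 <= INR k) by apply pos_INR.
    assert (t * Rabs (cc k t) <= t * (PI+t)^k) by (apply Rmult_le_compat_l; lra).
    assert (PI * Rabs (ss k t) <= PI * (INR k * t * (PI+t)^k)) by (apply Rmult_le_compat_l; lra).
    eapply Rle_trans. apply Rabs_triang. rewrite !Rabs_mult, (Rabs_right PI), (Rabs_right t) by lra.
    assert (0 <= t * (PI+t)^k) by (apply Rmult_le_pos; lra).
    assert (t * (PI+t)^k * (1 + PI * INR k) <= t * (PI+t)^k * ((INR k + 1) * (PI + t))).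
    { apply Rmult_le_compat_l. lra. nra. }
    nra.
Qed.

Lemma demoivre k t : 0 <= t ->
  cc k t = (sqrt (PI^2 + t^2)) ^ k * cos (INR k * atan (t / PI)) /\
  ss k t = (sqrt (PI^2 + t^2)) ^ k * sin (INR k * atan (t / PI)).
Proof.
  intro Ht. pose proof PIb.
  set (r := sqrt (PI^2 + t^2)). set (th := atan (t / PI)).
  assert (Hr : 0 < r) by (apply sqrt_lt_R0; nra).
  assert (Hr2 : r * r = PI^2 + t^2) by (apply sqrt_sqrt; nra).
  assert (Hs : sqrt (1 + (t/PI)²) = r / PI).
  { apply sqrt_lem_1.
    - unfold Rsqr. apply Rplus_le_le_0_compat; [lra| apply Rle_0_sqr].
    - apply Rlt_le, Rdiv_lt_0_compat; lra.
    - unfold Rsqr. replace (r / PI * (r / PI)) with ((r * r) / (PI * PI)) by (field; lra).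
      rewrite Hr2. field. lra. }
  assert (Hc : cos th = PI / r).
  { unfold th. rewrite cos_atan, Hs. field. lra. }
  assert (Hsn : sin th = t / r).
  { unfold th. rewrite sin_atan, Hs. field. lra. }
  induction k as [|k [IH1 IH2]].
  - unfold cc, ss; simpl. rewrite Rmult_0_l, cos_0, sin_0. split; ring.
  - rewrite cc_S, ss_S, IH1, IH2, S_INR.
    replace ((INR k + 1) * th) with (INR k * th + th) by ring.
    rewrite cos_plus, sin_plus, Hc, Hsn. simpl. split; field; lra.
Qed.

Lemma integrand_eq j t : 0 <= t ->
  (PI ^ 2 + t ^ 2) ^ j / (exp t - 1) * sin (2 * INR j * atan (t / PI)) = ss (2 * j) t / (exp t - 1).
Proof.
  intro Ht. destruct (demoivre (2 * j) t Ht) as [_ ->].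
  rewrite pow_mult. rewrite mult_INR.
  replace (sqrt (PI ^ 2 + t ^ 2) ^ 2) with (PI ^ 2 + t ^ 2).
  replace (INR 2) with 2 by (simpl; ring). unfold Rdiv. ring.
  simpl. rewrite !Rmult_1_r. rewrite sqrt_sqrt. ring. pose proof PIb. nra.
Qed.

Lemma ftc_lin (f g F : R -> R) (c a b : R) :
  (forall x, is_derive F x (f x + c * g x)) -> (forall x, continuous f x) -> (forall x, continuous g x) ->
  @eq R (RInt f a b + c * RInt g a b) (F b - F a).
Proof.
  intros HD Hf Hg.
  assert (Ef : ex_RInt f a b) by (apply (ex_RInt_continuous (V:=R_CompleteNormedModule)); auto).
  assert (Eg : ex_RInt g a b) by (apply (ex_RInt_continuous (V:=R_CompleteNormedModule)); auto).
  assert (H1 : is_RInt (fun x => f x + c * g x) a b (F b - F a)).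
  { apply (is_RInt_derive (V:=R_CompleteNormedModule) F (fun x => f x + c * g x)). intros; auto.
    intros x _. apply (continuous_plus f (fun x => c * g x)). auto.
    apply (continuous_scal_r c g). auto. }
  assert (H2 : is_RInt (fun x => f x + c * g x) a b (RInt f a b + c * RInt g a b)).
  { apply (is_RInt_plus (V:=R_NormedModule) f (fun x => c * g x)). apply (RInt_correct (V:=R_CompleteNormedModule)), Ef.
    apply (is_RInt_scal (V:=R_NormedModule) g). apply (RInt_correct (V:=R_CompleteNormedModule)), Eg. }
  apply (is_RInt_unique (V:=R_CompleteNormedModule)) in H1. apply (is_RInt_unique (V:=R_CompleteNormedModule)) in H2. congruence.
Qed.

Lemma cos_sin_nPI n : cos (INR n * PI) = (-1) ^ n /\ sin (INR n * PI) = 0.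
Proof.
  induction n as [|n [H1 H2]]. simpl. rewrite Rmult_0_l, cos_0, sin_0. auto.
  rewrite S_INR. replace ((INR n + 1) * PI) with (INR n * PI + PI) by ring.
  rewrite neg_cos, neg_sin, H1, H2. simpl. split; ring.
Qed.

Lemma m1sq n : (-1) ^ n * (-1) ^ n = 1.
Proof. induction n. simpl; ring. simpl. replace (-1 * (-1) ^ n * (-1 * (-1) ^ n)) with ((-1) ^ n * (-1) ^ n) by ring. auto. Qed.

Definition gam j n : R := RInt (fun x => x ^ (2 * j) * cos (INR n * x)) 0 PI.
Definition Jn j n b : R := RInt (fun t => ss (2 * j) t * exp (- (INR n * t))) 0 b.

Lemma cont_cc k x : continuous (cc k) x.
Proof. apply (ex_derive_continuous (K:=R_AbsRing) (V:=R_NormedModule)). eexists. apply (cs_deriv k x). Qed.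
Lemma cont_ss k x : continuous (ss k) x.
Proof. apply (ex_derive_continuous (K:=R_AbsRing) (V:=R_NormedModule)). eexists. apply (cs_deriv k x). Qed.

Lemma gam0 n : (0 < n)%nat -> gam 0 n = 0.
Proof.
  intro Hn. assert (HI : 0 < INR n) by (apply lt_0_INR; lia).
  unfold gam.
  pose proof (ftc_lin (fun x => x ^ (2 * 0) * cos (INR n * x)) (fun _ => 0) (fun x => sin (INR n * x) / INR n) 0 0 PI).
  match goal with |- ?L = _ => replace L with (L + 0 * RInt (fun _ : R => 0) 0 PI) by ring end.
  rewrite H. cbv beta. rewrite Rmult_0_r, sin_0. rewrite (proj2 (cos_sin_nPI n)). unfold Rdiv. rewrite Rmult_0_l, Rminus_0_r. reflexivity.
  intros. auto_derive. auto. simpl. field. lra.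
  intros. apply (ex_derive_continuous (K:=R_AbsRing) (V:=R_NormedModule)). auto_derive. auto.
  intros. apply (ex_derive_continuous (K:=R_AbsRing) (V:=R_NormedModule)). auto_derive. auto.
Qed.

Lemma gamS j n : (0 < n)%nat ->
  gam (S j) n = INR (2 * j + 2) * PI ^ (2 * j + 1) * (-1) ^ n / (INR n) ^ 2
                - INR (2 * j + 2) * INR (2 * j + 1) / (INR n) ^ 2 * gam j n.
Proof.
  intro Hn. assert (HI : 0 < INR n) by (apply lt_0_INR; lia).
  unfold gam.
  replace (2 * S j)%nat with (S (S (2 * j))) by lia. replace (2*j+2)%nat with (S (S (2*j))) by lia.
  replace (2*j+1)%nat with (S (2*j)) by lia. generalize (2*j)%nat; intro m.
  set (c := INR (S (S m)) * INR (S m) / (INR n) ^ 2).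
  pose proof (ftc_lin (fun x => x ^ (S (S m)) * cos (INR n * x)) (fun x => x ^ m * cos (INR n * x))
     (fun x => x ^ (S (S m)) * sin (INR n * x) / INR n + INR (S (S m)) * x ^ (S m) * cos (INR n * x) / (INR n) ^ 2) c 0 PI) as H.
  match goal with |- ?L = _ => replace L with (L + c * RInt (fun x => x ^ m * cos (INR n * x)) 0 PI - c * RInt (fun x => x ^ m * cos (INR n * x)) 0 PI) by ring end.
  rewrite H; cbv beta.
  - destruct (cos_sin_nPI n) as [C S].
    rewrite C, S, Rmult_0_r. unfold c. rewrite !pow_i by lia. field. lra.
  - intro x. auto_derive. auto. unfold c. change (match m with 0%nat => 1 | S _ => INR m + 1 end) with (INR (S m)). rewrite !S_INR. simpl. field. lra.
  - intros. apply (ex_derive_continuous (K:=R_AbsRing) (V:=R_NormedModule)). auto_derive. auto.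
  - intros. apply (ex_derive_continuous (K:=R_AbsRing) (V:=R_NormedModule)). auto_derive. auto.
Qed.

Lemma ex_cc k t : ex_derive (fun y => cc k y) t.
Proof. eexists. apply (cs_deriv k t). Qed.
Lemma ex_ss k t : ex_derive (fun y => ss k y) t.
Proof. eexists. apply (cs_deriv k t). Qed.
Lemma D_cc k t : Derive (fun y => cc k y) t = - INR k * ss (pred k) t.
Proof. apply is_derive_unique, cs_deriv. Qed.
Lemma D_ss k t : Derive (fun y => ss k y) t = INR k * cc (pred k) t.
Proof. apply is_derive_unique, cs_deriv. Qed.

Lemma JnS j n b : (0 < n)%nat ->
  Jn (S j) n b = - exp (- (INR n * b)) * (ss (2 * j + 2) b / INR n + INR (2 * j + 2) * cc (2 * j + 1) b / (INR n) ^ 2)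
                 + INR (2 * j + 2) * PI ^ (2 * j + 1) / (INR n) ^ 2
                 - INR (2 * j + 2) * INR (2 * j + 1) / (INR n) ^ 2 * Jn j n b.
Proof.
  intro Hn. assert (HI : 0 < INR n) by (apply lt_0_INR; lia).
  unfold Jn.
  replace (2 * S j)%nat with (S (S (2 * j))) by lia. replace (2*j+2)%nat with (S (S (2*j))) by lia.
  replace (2*j+1)%nat with (S (2*j)) by lia. generalize (2*j)%nat; intro m.
  set (c := INR (S (S m)) * INR (S m) / (INR n) ^ 2).
  pose proof (ftc_lin (fun t => ss (S (S m)) t * exp (- (INR n * t))) (fun t => ss m t * exp (- (INR n * t)))
     (fun t => - exp (- (INR n * t)) * (ss (S (S m)) t / INR n + INR (S (S m)) * cc (S m) t / (INR n) ^ 2)) c 0 b) as H.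
  match goal with |- ?L = _ => replace L with (L + c * RInt (fun t => ss m t * exp (- (INR n * t))) 0 b - c * RInt (fun t => ss m t * exp (- (INR n * t))) 0 b) by ring end.
  rewrite H; cbv beta.
  - destruct (cs_at0 (S m)) as [C0 _]. destruct (cs_at0 (S (S m))) as [_ S0].
    rewrite C0, S0, Rmult_0_r, Ropp_0, exp_0. unfold c. field. lra.
  - intro x. auto_derive. split; [apply ex_ss|split; [apply ex_cc|exact I]].
    rewrite D_cc, D_ss. simpl pred. unfold c.
    change (match m with 0%nat => 1 | S _ => INR m + 1 end) with (INR (S m)). rewrite !S_INR. simpl. field. lra.
  - intros. apply (ex_derive_continuous (K:=R_AbsRing) (V:=R_NormedModule)). auto_derive. exact (ex_ss _ _).
  - intros. apply (ex_derive_continuous (K:=R_AbsRing) (V:=R_NormedModule)). auto_derive. exact (ex_ss _ _).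
Qed.

Lemma exp_mono x y : x <= y -> exp x <= exp y.
Proof. intro H. destruct (Rle_lt_or_eq_dec _ _ H) as [H1|H1]. apply Rlt_le, exp_increasing, H1. subst; lra. Qed.

Fixpoint Bj (j : nat) : R := match j with O => 0 | S j => 2 * INR j + 3 + (2 * INR j + 2) * (2 * INR j + 1) * Bj j end.

Lemma Bj_pos j : 0 <= Bj j.
Proof. induction j; simpl. lra. pose proof (pos_INR j). nra. Qed.

Lemma Jn0 n b : Jn 0 n b = 0.
Proof.
  unfold Jn. rewrite (RInt_ext _ (fun _ => 0)). rewrite RInt_const. simpl. unfold scal; simpl. unfold mult; simpl. ring.
  intros. unfold ss; simpl. ring.
Qed.

Lemma Jbound j n b : (0 < n)%nat -> 0 <= b ->
  Rabs (Jn j n b - (-1) ^ n * gam j n) <= Bj j * exp (- b) * (PI + b) ^ (2 * j).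
Proof.
  intros Hn Hb. pose proof PIb as HPI.
  assert (HI : 1 <= INR n) by (apply (le_INR 1); lia).
  induction j as [|j IH].
  - rewrite Jn0, gam0 by auto. simpl. replace (0 - (-1) ^ n * 0) with 0 by ring. rewrite Rabs_R0. lra.
  - rewrite JnS, gamS by auto.
    set (D := Jn j n b - (-1) ^ n * gam j n) in IH.
    set (E := exp (- b)).
    assert (HE : 0 < E) by apply exp_pos.
    assert (HEn : exp (- (INR n * b)) <= E) by (apply exp_mono; nra).
    assert (HEn0 : 0 < exp (- (INR n * b))) by apply exp_pos.
    set (X := PI + b). assert (HX : 1 <= X) by (unfold X; lra).
    destruct (cs_bound1 (2 * j + 2) b Hb) as [_ Hs].
    destruct (cs_bound1 (2 * j + 1) b Hb) as [Hc _].
    fold X in Hs, Hc.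
    assert (P1 : X ^ (2 * j + 1) <= X ^ (2 * j + 2)) by (apply Rle_pow; lia || auto).
    assert (P0 : X ^ (2 * j) <= X ^ (2 * j + 2)) by (apply Rle_pow; lia || auto).
    replace (2 * S j)%nat with (2 * j + 2)%nat by lia.
    assert (Hpj : 0 <= X ^ (2 * j)) by (apply pow_le; lra).
    set (P := X ^ (2 * j + 2)) in *.
    set (sv := ss (2 * j + 2) b) in *. set (cv := cc (2 * j + 1) b) in *.
    set (k2 := INR (2 * j + 2)). set (k1 := INR (2 * j + 1)).
    assert (Hk2 : k2 = 2 * INR j + 2) by (unfold k2; rewrite plus_INR, mult_INR; simpl; ring).
    assert (Hk1 : k1 = 2 * INR j + 1) by (unfold k1; rewrite plus_INR, mult_INR; simpl; ring).
    assert (HIj := pos_INR j).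
    set (N := INR n) in *.
    assert (Hsg := m1sq n). set (sg := (-1) ^ n) in *. set (Q := PI ^ (2 * j + 1)).
    set (Jj := Jn j n b) in *. set (Gj := gam j n) in *.
    assert (Hid : - exp (- (N * b)) * (sv / N + k2 * cv / N ^ 2) + k2 * Q / N ^ 2 -
      k2 * k1 / N ^ 2 * Jj - sg * (k2 * Q * sg / N ^ 2 - k2 * k1 / N ^ 2 * Gj)
      = - exp (- (N * b)) * (sv / N + k2 * cv / N ^ 2) - k2 * k1 / N ^ 2 * D).
    { unfold D. rewrite <- (Rmult_1_r (k2 * Q / N ^ 2)) at 1. rewrite <- Hsg. field. lra. }


    rewrite Hid. clear Hid.
    assert (HN1 : / N <= 1) by (rewrite <- Rinv_1; apply Rinv_le_contravar; lra).
    assert (HN2 : / N ^ 2 <= 1) by (rewrite <- Rinv_1; apply Rinv_le_contravar; nra).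
    assert (HN1p : 0 < / N) by (apply Rinv_0_lt_compat; lra).
    assert (HN2p : 0 < / N ^ 2) by (apply Rinv_0_lt_compat; nra).
    assert (B1 : Rabs (sv / N + k2 * cv / N ^ 2) <= P + k2 * P).
    { unfold Rdiv. eapply Rle_trans. apply Rabs_triang. rewrite !Rabs_mult, (Rabs_right k2), (Rabs_right (/N)), (Rabs_right (/N^2)) by lra.
      assert (Rabs sv * / N <= P) by (apply Rle_trans with (Rabs sv * 1); [apply Rmult_le_compat_l; [apply Rabs_pos|lra] | lra]).
      assert (Rabs cv * / N^2 <= P) by (apply Rle_trans with (Rabs cv * 1); [apply Rmult_le_compat_l; [apply Rabs_pos|lra] | lra]).
      assert (0 <= k2) by lra. nra. }
    assert (B2 : Rabs D <= Bj j * E * P).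
    { eapply Rle_trans. apply IH. pose proof (Bj_pos j). apply Rmult_le_compat_l. nra. exact P0. }
    eapply Rle_trans. unfold Rminus. apply Rabs_triang.
    rewrite Rabs_Ropp, !Rabs_mult, Rabs_Ropp, (Rabs_right (exp _)) by lra.
    rewrite (Rabs_right (k2 * k1 / N ^ 2)) by (apply Rle_ge; unfold Rdiv; apply Rmult_le_pos; [nra|lra]).
    assert (Hc2 : k2 * k1 / N ^ 2 <= k2 * k1) by (unfold Rdiv; assert (0 <= k2 * k1) by nra; nra).
    assert (0 <= Rabs (sv / N + k2 * cv / N ^ 2)) by apply Rabs_pos.
    assert (0 <= Rabs D) by apply Rabs_pos.
    assert (0 <= P) by (unfold P; apply pow_le; lra).
    assert (T1 : exp (- (N * b)) * Rabs (sv / N + k2 * cv / N ^ 2) <= E * (P + k2 * P)).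
    { apply Rmult_le_compat; lra. }
    assert (T2 : k2 * k1 / N ^ 2 * Rabs D <= k2 * k1 * (Bj j * E * P)).
    { apply Rmult_le_compat; try lra. unfold Rdiv; apply Rmult_le_pos; [nra|lra]. }
    simpl Bj. rewrite <- Hk2, <- Hk1. fold E. fold X. fold P.
    replace ((k2 + 1 + k2 * k1 * Bj j) * E * P) with (E * (P + k2 * P) + k2 * k1 * (Bj j * E * P)) by ring.
    replace (2 * INR j + 3) with (k2 + 1) by lra.
    replace ((k2 + 1 + k2 * k1 * Bj j) * E * P) with (E * (P + k2 * P) + k2 * k1 * (Bj j * E * P)) by ring. lra.
Qed.

Lemma cont_ex (f : R -> R) a b : (forall x, continuous f x) -> ex_RInt f a b.
Proof. intros H. apply (ex_RInt_continuous (V:=R_CompleteNormedModule)). intros; apply H. Qed.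

Lemma RInt_plus_R (f g : R -> R) a b : ex_RInt f a b -> ex_RInt g a b ->
  @eq R (RInt (fun x => f x + g x) a b) (RInt f a b + RInt g a b).
Proof. intros. apply (RInt_plus (V:=R_CompleteNormedModule)); auto. Qed.

Lemma RInt_scal_R (f : R -> R) a b c : ex_RInt f a b ->
  @eq R (RInt (fun x => c * f x) a b) (c * RInt f a b).
Proof. intros. apply (RInt_scal (V:=R_CompleteNormedModule)); auto. Qed.

Lemma RInt_ext_R (f g : R -> R) a b : (forall x, Rmin a b < x < Rmax a b -> f x = g x) ->
  @eq R (RInt f a b) (RInt g a b).
Proof. intros. apply (RInt_ext (V:=R_CompleteNormedModule)); auto. Qed.

Lemma cont_smooth (f : R -> R) x : ex_derive f x -> continuous f x.
Proof. apply (ex_derive_continuous (K:=R_AbsRing) (V:=R_NormedModule)). Qed.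

Fixpoint Ksum (N : nat) (x : R) : R :=
  match N with O => 0 | S N => Ksum N x + (-1) ^ (S N) * cos (INR (S N) * x) end.

Lemma Ksum_cont N x : continuous (Ksum N) x.
Proof.
  revert x. induction N as [|N IH]; intro x.
  - simpl. apply cont_smooth. auto_derive. auto.
  - change (Ksum (S N)) with (fun x => Ksum N x + (-1) ^ (S N) * cos (INR (S N) * x)).
    apply (continuous_plus (Ksum N) (fun x => (-1) ^ (S N) * cos (INR (S N) * x))). apply IH.
    apply cont_smooth. auto_derive. auto.
Qed.

Lemma cos2 a b : 2 * cos a * cos b = cos (b + a) + cos (b - a).
Proof. rewrite cos_plus, cos_minus. ring. Qed.

Lemma Kclosed N x : 2 * cos (x / 2) * (Ksum N x + 1 / 2) = (-1) ^ N * cos ((INR N + 1 / 2) * x).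
Proof.
  induction N as [|N IH].
  - simpl. replace ((0 + 1 / 2) * x) with (x / 2) by field. field.
  - change (Ksum (S N) x) with (Ksum N x + (-1) ^ (S N) * cos (INR (S N) * x)).
    replace (2 * cos (x / 2) * (Ksum N x + (-1) ^ S N * cos (INR (S N) * x) + 1 / 2))
      with (2 * cos (x / 2) * (Ksum N x + 1 / 2) + (-1) ^ S N * (2 * cos (x / 2) * cos (INR (S N) * x))) by ring.
    rewrite IH, cos2. rewrite S_INR.
    replace ((INR N + 1) * x + x / 2) with ((INR N + 1 + 1 / 2) * x) by field.
    replace ((INR N + 1) * x - x / 2) with ((INR N + 1 / 2) * x) by field.
    simpl. ring.
Qed.

Fixpoint Tsum (j N : nat) : R :=
  match N with O => 0 | S N => Tsum j N + (-1) ^ (S N) * gam j (S N) end.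

Lemma Tsum_int j N : Tsum j N = RInt (fun x => x ^ (2 * j) * Ksum N x) 0 PI.
Proof.
  induction N as [|N IH].
  - simpl. rewrite (RInt_ext_R _ (fun _ => 0)). rewrite RInt_const. simpl. unfold scal; simpl. unfold mult; simpl. ring.
    intros; ring.
  - change (Tsum j (S N)) with (Tsum j N + (-1) ^ (S N) * gam j (S N)).
    change (Ksum (S N)) with (fun x => Ksum N x + (-1) ^ (S N) * cos (INR (S N) * x)). rewrite IH. unfold gam. symmetry.
    rewrite (RInt_ext_R (fun x => x ^ (2 * j) * (Ksum N x + (-1) ^ S N * cos (INR (S N) * x))) (fun x => x ^ (2 * j) * Ksum N x + (-1) ^ S N * (x ^ (2 * j) * cos (INR (S N) * x)))).
    rewrite RInt_plus_R, RInt_scal_R. reflexivity.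
    + apply cont_ex. intro x. apply cont_smooth. auto_derive. auto.
    + apply cont_ex. intro x. apply (continuous_mult (fun x => x ^ (2 * j)) (Ksum N)). apply cont_smooth. auto_derive. auto. apply Ksum_cont.
    + apply cont_ex. intro x. apply cont_smooth. auto_derive. auto.
    + intros. ring.
Qed.

Lemma Ksum_int N : @eq R (RInt (Ksum N) 0 PI) 0.
Proof.
  induction N as [|N IH].
  - simpl. rewrite RInt_const. simpl. unfold scal; simpl. unfold mult; simpl. ring.
  - change (Ksum (S N)) with (fun x => Ksum N x + (-1) ^ (S N) * cos (INR (S N) * x)).
    rewrite RInt_plus_R, RInt_scal_R, IH.
    pose proof (gam0 (S N) ltac:(lia)) as G. unfold gam in G.
    rewrite (RInt_ext_R _ (fun x => x ^ (2 * 0) * cos (INR (S N) * x))), G. ring.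
    intros; simpl; ring.
    apply cont_ex. intro x. apply cont_smooth. auto_derive. auto.
    apply cont_ex. apply Ksum_cont.
    apply cont_ex. intro x. apply cont_smooth. auto_derive. auto.
Qed.

Lemma lip_cont (g : R -> R) L x : 0 <= L -> (forall x z, Rabs (g x - g z) <= L * Rabs (x - z)) -> continuous g x.
Proof.
  intros HL H. apply continuity_pt_filterlim.
  intros eps Heps. exists (eps / (L + 1)). split.
  apply Rdiv_lt_0_compat; lra.
  intros y [_ Hy]. simpl in *. unfold R_dist in *.
  eapply Rle_lt_trans. apply H.
  apply Rle_lt_trans with ((L + 1) * Rabs (y - x)). apply Rmult_le_compat_r. apply Rabs_pos. lra.
  apply Rmult_lt_reg_l with (/ (L + 1)). apply Rinv_0_lt_compat; lra.
  rewrite <- Rmult_assoc, Rinv_l, Rmult_1_l by lra. rewrite Rmult_comm. exact Hy.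
Qed.

Lemma tri3 a b c : Rabs (a + b - c) <= Rabs a + Rabs b + Rabs c.
Proof.
  unfold Rminus. eapply Rle_trans. apply Rabs_triang. rewrite Rabs_Ropp.
  pose proof (Rabs_triang a b). lra.
Qed.

Lemma RL (g : R -> R) L B M : 0 <= L -> 1 <= M ->
  (forall x z, Rabs (g x - g z) <= L * Rabs (x - z)) -> (forall x, Rabs (g x) <= B) ->
  Rabs (RInt (fun x => g x * cos (M * x)) 0 PI) <= (PI * L + 2 * B) * PI / (2 * M).
Proof.
  intros HL HM Hlip HB. pose proof PIb.
  set (d := PI / M).
  assert (Hd : 0 < d <= PI).
  { unfold d. split. apply Rdiv_lt_0_compat; lra.
    apply Rmult_le_reg_r with M. lra. unfold Rdiv. rewrite Rmult_assoc, Rinv_l, Rmult_1_r by lra. nra. }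
  assert (Hgc : forall x, continuous g x) by (intro; apply (lip_cont g L); auto).
  set (phi := fun x => g x * cos (M * x)).
  assert (Hpc : forall x, continuous phi x).
  { intro x. apply (continuous_mult g (fun x => cos (M * x))). auto. apply cont_smooth. auto_derive. auto. }
  assert (Ex : forall a b, ex_RInt phi a b) by (intros; apply cont_ex; auto).
  set (psi := fun y => g (y + d) * cos (M * y)).
  assert (Hsc : forall x, continuous psi x).
  { intro x. apply (continuous_mult (fun y => g (y + d)) (fun x => cos (M * x))).
    apply (lip_cont _ L). auto. intros; eapply Rle_trans; [apply Hlip|]; right; f_equal; f_equal; ring.
    apply cont_smooth. auto_derive. auto. }
  assert (Exs : forall a b, ex_RInt psi a b) by (intros; apply cont_ex; auto).
  assert (Hsub : @eq R (RInt phi 0 PI) (- RInt psi (- d) (PI - d))).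
  { pose proof (RInt_comp_lin (V:=R_CompleteNormedModule) phi 1 d (- d) (PI - d)) as Hc.
    replace (1 * - d + d) with 0 in Hc by ring. replace (1 * (PI - d) + d) with PI in Hc by ring.
    rewrite <- Hc by auto. replace (- RInt psi (- d) (PI - d)) with ((-1) * RInt psi (- d) (PI - d)) by ring.
    rewrite <- (RInt_scal_R psi). apply RInt_ext_R.
    intros x _. unfold phi, psi. change (scal 1 ?z) with (1 * z). rewrite Rmult_1_l. replace (1 * x + d) with (x + d) by ring.
    replace (M * (x + d)) with (M * x + PI) by (unfold d; field; lra). rewrite neg_cos. ring.
    auto. }
  assert (S1 : @eq R (RInt phi 0 PI) (RInt phi 0 (PI - d) + RInt phi (PI - d) PI)).
  { symmetry. apply (RInt_Chasles (V:=R_CompleteNormedModule)); auto. }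
  assert (S2 : @eq R (RInt psi (- d) (PI - d)) (RInt psi (- d) 0 + RInt psi 0 (PI - d))).
  { symmetry. apply (RInt_Chasles (V:=R_CompleteNormedModule)); auto. }
  assert (S3 : @eq R (RInt phi 0 (PI - d) - RInt psi 0 (PI - d)) (RInt (fun y => (g y - g (y + d)) * cos (M * y)) 0 (PI - d))).
  { rewrite (RInt_ext_R (fun y => (g y - g (y + d)) * cos (M * y)) (fun y => phi y + (-1) * psi y)). rewrite RInt_plus_R, RInt_scal_R. ring.
    auto. auto. apply cont_ex. intro x. apply (continuous_scal_r (-1) psi). auto.
    intros; unfold phi, psi; ring. }
  assert (B1 : Rabs (RInt (fun y => (g y - g (y + d)) * cos (M * y)) 0 (PI - d)) <= (PI - d - 0) * (L * d)).
  { apply abs_RInt_le_const. lra.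
    apply cont_ex. intro x. apply (continuous_mult (fun y => g y - g (y + d)) (fun x => cos (M * x))).
    apply (continuous_minus g (fun y => g (y + d))). auto.
    apply (lip_cont _ L). auto. intros; eapply Rle_trans; [apply Hlip|]; right; f_equal; f_equal; ring.
    apply cont_smooth. auto_derive. auto.
    intros t _. rewrite Rabs_mult. pose proof (COS_bound (M * t)).
    assert (Rabs (cos (M * t)) <= 1) by (apply Rabs_le; lra).
    assert (Rabs (g t - g (t + d)) <= L * d).
    { eapply Rle_trans. apply Hlip. replace (t - (t + d)) with (- d) by ring. rewrite Rabs_Ropp, Rabs_right by lra. lra. }
    assert (0 <= Rabs (g t - g (t + d))) by apply Rabs_pos.
    nra. }
  assert (B2 : Rabs (RInt phi (PI - d) PI) <= (PI - (PI - d)) * B).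
  { apply abs_RInt_le_const. lra. auto. intros t _. unfold phi. rewrite Rabs_mult.
    pose proof (COS_bound (M * t)). assert (Rabs (cos (M * t)) <= 1) by (apply Rabs_le; lra).
    pose proof (HB t). pose proof (Rabs_pos (g t)). pose proof (Rabs_pos (cos (M * t))). nra. }
  assert (B3 : Rabs (RInt psi (- d) 0) <= (0 - - d) * B).
  { apply abs_RInt_le_const. lra. auto. intros t _. unfold psi. rewrite Rabs_mult.
    pose proof (COS_bound (M * t)). assert (Rabs (cos (M * t)) <= 1) by (apply Rabs_le; lra).
    pose proof (HB (t + d)). pose proof (Rabs_pos (g (t + d))). pose proof (Rabs_pos (cos (M * t))). nra. }
  change (RInt (fun x => g x * cos (M * x)) 0 PI) with (RInt phi 0 PI).
  set (I := RInt phi 0 PI) in *.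
  assert (H2I : 2 * I = (RInt (fun y => (g y - g (y + d)) * cos (M * y)) 0 (PI - d)) + RInt phi (PI - d) PI - RInt psi (- d) 0).
  { rewrite <- S3. rewrite S2 in Hsub. lra. }
  assert (Habs : Rabs (2 * I) <= PI * (L * d) + d * B + d * B).
  { rewrite H2I. eapply Rle_trans. apply tri3.
    assert ((PI - d - 0) * (L * d) <= PI * (L * d)) by (apply Rmult_le_compat_r; nra).
    lra. }
  rewrite Rabs_mult, Rabs_right in Habs by lra.
  replace ((PI * L + 2 * B) * PI / (2 * M)) with ((PI * (L * d) + d * B + d * B) / 2) by (unfold d; field; lra).
  lra.
Qed.

Lemma sin_bnds u : 0 <= u <= 2 -> u - u ^ 3 / 6 <= sin u <= u.
Proof.
  intros Hu. pose proof PIb.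
  destruct (sin_bound u 0 ltac:(lra) ltac:(lra)) as [H1 H2].
  unfold sin_approx, sin_term in H1, H2. simpl sum_f_R0 in H1, H2. cbn -[pow Rdiv] in H1, H2.
  split. replace (u - u ^ 3 / 6) with (1 * (u * 1 / 1) + -1 * 1 * (u * (u * (u * 1)) / (1 + 1 + 1 + 1 + 1 + 1))) by (simpl; field). lra.
  eapply Rle_trans. apply H2. simpl.
  assert (0 <= u ^ 3 * (20 - u ^ 2)) by (apply Rmult_le_pos; [apply pow_le|]; simpl; nra).
  simpl in H. field_simplify. nra.
Qed.

Lemma cos_lbnd u : 0 <= u <= 3/2 -> 1 - u ^ 2 / 2 <= cos u.
Proof.
  intros Hu. pose proof PIb.
  destruct (cos_bound u 0 ltac:(lra) ltac:(lra)) as [H1 H2].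
  unfold cos_approx, cos_term in H1. simpl sum_f_R0 in H1. cbn -[pow Rdiv] in H1.
  replace (1 - u ^ 2 / 2) with (1 * (1 / 1) + -1 * 1 * (u * (u * 1) / (1 + 1))) by (simpl; field). lra.
Qed.

Lemma PI_ub : PI < 16 / 5.
Proof.
  destruct (pre_cos_bound (8/5) 0 ltac:(lra) ltac:(lra)) as [_ H2].
  unfold cos_approx, cos_term in H2. simpl sum_f_R0 in H2. cbn -[pow Rdiv] in H2.
  assert (Hc : cos (8/5) < 0) by (eapply Rle_lt_trans; [exact H2|]; simpl; lra).
  destruct (Rlt_or_le PI (16/5)) as [H|H]. auto.
  exfalso. pose proof (cos_ge_0 (8/5)). pose proof PIb. assert (0 <= cos (8/5)) by (apply H0; lra). lra.
Qed.

Lemma cos_lbnd2 u : 0 <= u <= 2 -> 1 - u ^ 2 / 2 <= cos u.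
Proof.
  intros Hu.
  destruct (pre_cos_bound u 0 ltac:(lra) ltac:(lra)) as [H1 H2].
  unfold cos_approx, cos_term in H1. simpl sum_f_R0 in H1. cbn -[pow Rdiv] in H1.
  replace (1 - u ^ 2 / 2) with (1 * (1 / 1) + -1 * 1 * (u * (u * 1) / (1 + 1))) by (simpl; field). lra.
Qed.

Lemma u_facts u : 0 < u <= 8/5 ->
  u / 2 <= sin u /\ sin u <= u /\ Rabs (sin u - u * cos u) <= u ^ 3 / 2 /\ Rabs (u - sin u) <= u ^ 3 / 6.
Proof.
  intros Hu. destruct (sin_bnds u ltac:(lra)) as [S1 S2].
  pose proof (cos_lbnd2 u ltac:(lra)) as C1. pose proof (COS_bound u) as [_ C2].
  assert (Hu3 : u ^ 3 = u * u * u) by (simpl; ring).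
  assert (Hu2 : u ^ 2 = u * u) by (simpl; ring).
  rewrite Hu2 in C1. rewrite Hu3 in *.
  split. nra. split. lra. split.
  - apply Rabs_le. split; nra.
  - apply Rabs_le. split; nra.
Qed.

Definition wf (y : R) := y / (2 * sin (y / 2)).
Definition w (y : R) := if Req_EM_T y 0 then 1 else wf y.
Definition dwf (x : R) := (sin (x / 2) - (x / 2) * cos (x / 2)) / (2 * sin (x / 2) ^ 2).

Lemma wf_deriv x : sin (x / 2) <> 0 -> is_derive wf x (dwf x).
Proof.
  intro H. unfold wf, dwf. auto_derive. change (x * / 2) with (x / 2); lra. change (x * / 2) with (x / 2). field. auto.
Qed.

Lemma sin_half_pos y : 0 < y <= PI -> 0 < sin (y / 2).
Proof. intros. apply sin_gt_0; pose proof PIb; lra. Qed.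

Lemma dwf_bnd x : 0 < x <= PI -> Rabs (dwf x) <= 2.
Proof.
  intros Hx. pose proof PI_ub. pose proof PIb.
  destruct (u_facts (x / 2) ltac:(lra)) as [A [B [C D]]].
  set (u := x / 2) in *. set (s := sin u) in *.
  assert (Hu : 0 < u) by (unfold u; lra). assert (Hs : 0 < s) by lra.
  unfold dwf. fold u. fold s. unfold Rdiv. rewrite Rabs_mult. rewrite Rabs_inv.
  rewrite (Rabs_right (2 * s ^ 2)) by (apply Rle_ge; simpl; nra).
  apply Rle_trans with (u ^ 3 / 2 * / (2 * s ^ 2)).
  apply Rmult_le_compat_r. apply Rlt_le, Rinv_0_lt_compat. simpl; nra. exact C.
  assert (2 * s ^ 2 >= 2 * (u / 2) ^ 2) by (simpl; nra).
  apply Rle_trans with (u ^ 3 / 2 * / (2 * (u / 2) ^ 2)).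
  apply Rmult_le_compat_l. simpl; nra. apply Rinv_le_contravar. simpl; nra. lra.
  replace (u ^ 3 / 2 * / (2 * (u / 2) ^ 2)) with u by (field; lra). unfold u; lra.
Qed.

Lemma wf_cont x : 0 < x <= PI -> continuity_pt wf x.
Proof.
  intros Hx. apply continuity_pt_filterlim. apply cont_smooth. eexists. apply wf_deriv.
  pose proof (sin_half_pos x Hx). lra.
Qed.

Lemma wf_lip y z : 0 < y <= PI -> 0 < z <= PI -> Rabs (wf y - wf z) <= 2 * Rabs (y - z).
Proof.
  intros Hy Hz.
  destruct (MVT_gen wf z y dwf) as [c [Hc E]].
  - intros x Hx. apply wf_deriv. assert (0 < x <= PI) by (pose proof (Rmin_glb_lt _ _ _ (proj1 Hy) (proj1 Hz)); unfold Rmin, Rmax in *; destruct Rle_dec; lra).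
    pose proof (sin_half_pos x H). lra.
  - intros x Hx. apply wf_cont. unfold Rmin, Rmax in Hx; destruct Rle_dec in Hx; lra.
  - rewrite E, Rabs_mult. apply Rmult_le_compat_r. apply Rabs_pos. apply dwf_bnd.
    unfold Rmin, Rmax in Hc; destruct Rle_dec in Hc; lra.
Qed.

Lemma wf_near0 y : 0 < y <= PI -> Rabs (wf y - 1) <= 2 * y.
Proof.
  intros Hy. pose proof PI_ub. pose proof PIb.
  destruct (u_facts (y / 2) ltac:(lra)) as [A [B [C D]]].
  unfold wf. set (u := y / 2) in *. set (s := sin u) in *. assert (Hu : 0 < u) by (unfold u; lra). assert (Hs : 0 < s) by lra.
  replace (y / (2 * s) - 1) with ((u - s) / s) by (unfold u; field; lra).
  unfold Rdiv. rewrite Rabs_mult, Rabs_inv, (Rabs_right s) by lra.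
  apply Rle_trans with (u ^ 3 / 6 * / s). apply Rmult_le_compat_r. apply Rlt_le, Rinv_0_lt_compat; lra. exact D.
  apply Rle_trans with (u ^ 3 / 6 * / (u / 2)). apply Rmult_le_compat_l. simpl; nra.
  apply Rinv_le_contravar; lra.
  replace (u ^ 3 / 6 * / (u / 2)) with (u * u / 3) by (simpl; field; lra). unfold u. nra.
Qed.

Lemma w_lip y z : 0 <= y <= PI -> 0 <= z <= PI -> Rabs (w y - w z) <= 2 * Rabs (y - z).
Proof.
  intros Hy Hz. unfold w.
  destruct (Req_EM_T y 0) as [Ey|Ey]; destruct (Req_EM_T z 0) as [Ez|Ez].
  - subst. replace (1 - 1) with 0 by ring. rewrite Rabs_R0. pose proof (Rabs_pos (0 - 0)). lra.
  - subst. rewrite Rabs_minus_sym. eapply Rle_trans. apply wf_near0. lra.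
    replace (0 - z) with (- z) by ring. rewrite Rabs_Ropp, Rabs_right by lra. lra.
  - subst. eapply Rle_trans. apply wf_near0. lra.
    replace (y - 0) with y by ring. rewrite Rabs_right by lra. lra.
  - apply wf_lip; lra.
Qed.

Lemma w_bnd y : 0 <= y <= PI -> Rabs (w y) <= 2.
Proof.
  intros Hy. unfold w. destruct (Req_EM_T y 0). rewrite Rabs_R1; lra.
  pose proof (wf_near0 y ltac:(lra)).
  pose proof PI_ub. pose proof PIb.
  destruct (u_facts (y / 2) ltac:(lra)) as [A [B [C D]]].
  unfold wf. rewrite Rabs_right. apply Rmult_le_reg_r with (2 * sin (y / 2)). lra.
  unfold Rdiv. rewrite Rmult_assoc, Rinv_l, Rmult_1_r by lra. lra.
  apply Rle_ge, Rlt_le, Rdiv_lt_0_compat; lra.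
Qed.

Fixpoint qq (m : nat) (x : R) : R := match m with O => 0 | S m => x * qq m x + PI ^ m end.
Fixpoint Lq (m : nat) : R := match m with O => 0 | S m => PI * Lq m + INR m * PI ^ m end.

Lemma qq_id m x : x ^ m - PI ^ m = (x - PI) * qq m x.
Proof. induction m as [|m IH]. simpl; ring. simpl qq. simpl pow. 
  replace (x * x ^ m - PI * PI ^ m) with (x * (x ^ m - PI ^ m) + (x - PI) * PI ^ m) by ring. rewrite IH. ring. Qed.

Lemma qq_bnd m x : 0 <= x <= PI -> Rabs (qq m x) <= INR m * PI ^ m.
Proof.
  intros Hx. pose proof PIb. induction m as [|m IH]. simpl. rewrite Rabs_R0; lra.
  simpl qq. rewrite S_INR. simpl pow.
  assert (0 <= PI ^ m) by (apply pow_le; lra).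
  eapply Rle_trans. apply Rabs_triang. rewrite Rabs_mult, (Rabs_right x), (Rabs_right (PI ^ m)) by lra.
  assert (x * Rabs (qq m x) <= PI * (INR m * PI ^ m)) by (apply Rmult_le_compat; try lra; apply Rabs_pos).
  pose proof (pos_INR m). nra.
Qed.

Lemma Lq_pos m : 0 <= Lq m.
Proof. pose proof PIb. induction m; simpl. lra. pose proof (pos_INR m). assert (0 <= PI ^ m) by (apply pow_le; lra). nra. Qed.

Lemma qq_lip m x z : 0 <= x <= PI -> 0 <= z <= PI -> Rabs (qq m x - qq m z) <= Lq m * Rabs (x - z).
Proof.
  intros Hx Hz. pose proof PIb. induction m as [|m IH]. simpl. replace (0 - 0) with 0 by ring. rewrite Rabs_R0. lra.
  simpl qq. simpl Lq.
  replace (x * qq m x + PI ^ m - (z * qq m z + PI ^ m)) with (x * (qq m x - qq m z) + (x - z) * qq m z) by ring.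
  eapply Rle_trans. apply Rabs_triang. rewrite !Rabs_mult, (Rabs_right x) by lra.
  pose proof (qq_bnd m z Hz). pose proof (Rabs_pos (x - z)). pose proof (Rabs_pos (qq m x - qq m z)).
  assert (x * Rabs (qq m x - qq m z) <= PI * (Lq m * Rabs (x - z))) by (apply Rmult_le_compat; lra).
  assert (Rabs (x - z) * Rabs (qq m z) <= Rabs (x - z) * (INR m * PI ^ m)) by (apply Rmult_le_compat_l; lra).
  nra.
Qed.

Definition cl (x : R) := Rmax 0 (Rmin PI x).

Lemma cl_range x : 0 <= cl x <= PI.
Proof. pose proof PIb. unfold cl, Rmax, Rmin. destruct (Rle_dec PI x); destruct Rle_dec; lra. Qed.

Lemma cl_lip x z : Rabs (cl x - cl z) <= Rabs (x - z).
Proof.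
  pose proof PIb. unfold cl, Rmax, Rmin.
  destruct (Rle_dec PI x); destruct (Rle_dec PI z); repeat destruct Rle_dec;
  apply Rabs_le; destruct (Rabs_le_between' (x - z) (Rabs (x - z)) 0) as [_ Hb];
  (assert (HH : -Rabs (x - z) <= x - z <= Rabs (x - z)) by (split; [pose proof (Rabs_maj2 (x - z)); lra | apply Rle_abs]));
  lra.
Qed.

Lemma cl_id x : 0 <= x <= PI -> cl x = x.
Proof. pose proof PIb. intros. unfold cl, Rmax, Rmin. repeat destruct Rle_dec; lra. Qed.

Definition Gc (j : nat) (x : R) := - qq (2 * j) (cl x) * w (PI - cl x).
Definition Lg (j : nat) := 2 * (INR (2 * j) * PI ^ (2 * j)) + 2 * Lq (2 * j).
Definition Bg (j : nat) := 2 * (INR (2 * j) * PI ^ (2 * j)).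

Lemma Gc_lip j x z : Rabs (Gc j x - Gc j z) <= Lg j * Rabs (x - z).
Proof.
  unfold Gc, Lg. pose proof (cl_range x). pose proof (cl_range z). pose proof (cl_lip x z).
  set (a := cl x) in *. set (b := cl z) in *.
  replace (- qq (2 * j) a * w (PI - a) - - qq (2 * j) b * w (PI - b))
    with (- (qq (2 * j) a * (w (PI - a) - w (PI - b)) + w (PI - b) * (qq (2 * j) a - qq (2 * j) b))) by ring.
  rewrite Rabs_Ropp. eapply Rle_trans. apply Rabs_triang. rewrite !Rabs_mult.
  pose proof (qq_bnd (2 * j) a H). pose proof (w_bnd (PI - b) ltac:(lra)).
  pose proof (w_lip (PI - a) (PI - b) ltac:(lra) ltac:(lra)). replace (PI - a - (PI - b)) with (- (a - b)) in H4 by ring.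
  rewrite Rabs_Ropp in H4.
  pose proof (qq_lip (2 * j) a b H H0).
  pose proof (Rabs_pos (qq (2 * j) a)). pose proof (Rabs_pos (w (PI - b))). pose proof (Rabs_pos (a - b)). pose proof (Rabs_pos (x - z)).
  pose proof (Rabs_pos (w (PI - a) - w (PI - b))). pose proof (Rabs_pos (qq (2 * j) a - qq (2 * j) b)).
  pose proof (Lq_pos (2 * j)).
  assert (Rabs (qq (2 * j) a) * Rabs (w (PI - a) - w (PI - b)) <= (INR (2 * j) * PI ^ (2 * j)) * (2 * Rabs (x - z))).
  { apply Rmult_le_compat; lra. }
  assert (Rabs (w (PI - b)) * Rabs (qq (2 * j) a - qq (2 * j) b) <= 2 * (Lq (2 * j) * Rabs (x - z))).
  { apply Rmult_le_compat; try lra. eapply Rle_trans. apply H5. apply Rmult_le_compat_l; lra. }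
  lra.
Qed.

Lemma Gc_bnd j x : Rabs (Gc j x) <= Bg j.
Proof.
  unfold Gc, Bg. pose proof (cl_range x). rewrite Rabs_mult, Rabs_Ropp.
  pose proof (qq_bnd (2 * j) (cl x) H). pose proof (w_bnd (PI - cl x) ltac:(lra)).
  pose proof (Rabs_pos (qq (2 * j) (cl x))). pose proof (Rabs_pos (w (PI - cl x))). nra.
Qed.

Lemma Lg_pos j : 0 <= Lg j.
Proof. unfold Lg. pose proof (Lq_pos (2 * j)). pose proof (pos_INR (2 * j)). pose proof PIb.
  assert (0 <= PI ^ (2 * j)) by (apply pow_le; lra). nra. Qed.

Lemma pointwise j N x : 0 < x < PI ->
  x ^ (2 * j) * Ksum N x = PI ^ (2 * j) * Ksum N x + (- (x ^ (2 * j) - PI ^ (2 * j)) / 2)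
     + (-1) ^ N * (Gc j x * cos ((INR N + 1 / 2) * x)).
Proof.
  intros Hx. pose proof PIb.
  assert (Hc : 0 < cos (x / 2)) by (apply cos_gt_0; lra).
  pose proof (Kclosed N x) as K.
  assert (HK : Ksum N x = (-1) ^ N * cos ((INR N + 1 / 2) * x) / (2 * cos (x / 2)) - 1 / 2).
  { rewrite <- K. field. lra. }
  unfold Gc. rewrite cl_id by lra. unfold w. destruct (Req_EM_T (PI - x) 0). lra.
  unfold wf. replace ((PI - x) / 2) with (PI / 2 - x / 2) by field. rewrite sin_shift.
  pose proof (qq_id (2 * j) x) as Q.
  set (A := x ^ (2 * j)) in *. set (P := PI ^ (2 * j)) in *. set (sg := (-1) ^ N) in *.
  set (q := qq (2 * j) x) in *. set (C := cos ((INR N + 1 / 2) * x)) in *.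
  replace A with (P + (x - PI) * q) by lra. rewrite HK. field. lra.
Qed.

Definition target (j : nat) : R := INR j * PI ^ (2 * j + 1) / (2 * INR j + 1).

Lemma half_int j : @eq R (RInt (fun x => - (x ^ (2 * j) - PI ^ (2 * j)) / 2) 0 PI) (target j).
Proof.
  unfold target. pose proof PIb as HPI.
  replace (2 * INR j + 1) with (INR (S (2 * j))) by (rewrite S_INR, mult_INR; simpl; ring).
  replace (INR j) with (INR (2 * j) / 2) by (rewrite mult_INR; simpl; field).
  replace (2 * j + 1)%nat with (S (2 * j)) by lia. generalize (2 * j)%nat; intro m.
  pose proof (ftc_lin (fun x => - (x ^ m - PI ^ m) / 2) (fun _ => 0)
     (fun x => - (x ^ (S m) / INR (S m) - PI ^ m * x) / 2) 0 0 PI) as H.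
  assert (HS : 0 < INR (S m)) by (apply lt_0_INR; lia).
  match goal with |- @eq R ?L _ => replace L with (L + 0 * RInt (fun _ : R => 0) 0 PI) by ring end.
  rewrite H; cbv beta.
  - rewrite pow_i by lia. rewrite S_INR. simpl. field. rewrite S_INR in HS. lra.
  - intro x. auto_derive. exact I. change (match m with 0%nat => 1 | S _ => INR m + 1 end) with (INR (S m)). field. lra.
  - intros. apply cont_smooth. auto_derive. auto.
  - intros. apply cont_smooth. auto_derive. auto.
Qed.

Definition CRL (j : nat) : R := (PI * Lg j + 2 * Bg j) * PI / 2.

Lemma Tsum_est j N : (1 <= N)%nat ->
  Rabs (Tsum j N - target j) <= CRL j / (INR N + 1 / 2).
Proof.
  intros HN. pose proof PIb.
  assert (HIN : 1 <= INR N) by (apply (le_INR 1); lia).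
  set (M := INR N + 1 / 2).
  rewrite Tsum_int.
  assert (Gcc : forall x, continuous (Gc j) x) by (intro; apply (lip_cont _ (Lg j)); [apply Lg_pos | apply Gc_lip]).
  rewrite (RInt_ext_R (fun x => x ^ (2 * j) * Ksum N x)
     (fun x => (PI ^ (2 * j) * Ksum N x + (- (x ^ (2 * j) - PI ^ (2 * j)) / 2)) + (-1) ^ N * (Gc j x * cos (M * x)))).
  2: { intros x Hx. rewrite Rmin_left, Rmax_right in Hx by lra. apply pointwise. lra. }
  assert (C1 : forall x, continuous (Ksum N) x) by apply Ksum_cont.
  assert (C2 : forall x, continuous (fun x => Gc j x * cos (M * x)) x).
  { intro x. apply (continuous_mult (Gc j) (fun x => cos (M * x))). auto. apply cont_smooth. auto_derive. auto. }
  assert (C3 : forall x, continuous (fun x => - (x ^ (2 * j) - PI ^ (2 * j)) / 2) x).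
  { intro x. apply cont_smooth. auto_derive. auto. }
  assert (C4 : forall x, continuous (fun x => PI ^ (2 * j) * Ksum N x) x).
  { intro x. apply (continuous_scal_r (PI ^ (2 * j)) (Ksum N)). auto. }
  assert (C5 : forall x, continuous (fun x => PI ^ (2 * j) * Ksum N x + - (x ^ (2 * j) - PI ^ (2 * j)) / 2) x).
  { intro x. apply (continuous_plus (fun x => PI ^ (2 * j) * Ksum N x) (fun x => - (x ^ (2 * j) - PI ^ (2 * j)) / 2)); auto. }
  assert (C6 : forall x, continuous (fun x => (-1) ^ N * (Gc j x * cos (M * x))) x).
  { intro x. apply (continuous_scal_r ((-1) ^ N) (fun x => Gc j x * cos (M * x))). auto. }
  rewrite RInt_plus_R, RInt_plus_R, RInt_scal_R, RInt_scal_R, Ksum_int, half_int.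
  - replace (PI ^ (2 * j) * 0 + target j + (-1) ^ N * RInt (fun x => Gc j x * cos (M * x)) 0 PI - target j)
      with ((-1) ^ N * RInt (fun x => Gc j x * cos (M * x)) 0 PI) by ring.
    rewrite Rabs_mult, pow_1_abs, Rmult_1_l.
    eapply Rle_trans. apply (RL (Gc j) (Lg j) (Bg j) M). apply Lg_pos. unfold M; lra.
    apply Gc_lip. apply Gc_bnd.
    unfold CRL. right. field. unfold M; lra.
  all: apply cont_ex; first [exact C1 | exact C2 | exact C3 | exact C4 | exact C5 | exact C6].
Qed.

Lemma nat_unbounded A : exists n : nat, A < INR n.
Proof.
  destruct (archimed A) as [H _].
  destruct (Z_lt_le_dec (up A) 0) as [Hz|Hz].
  - exists 0%nat. simpl. apply IZR_lt in Hz. lra.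
  - exists (Z.to_nat (up A)). rewrite INR_IZR_INZ, Z2Nat.id by lia. exact H.
Qed.

Lemma pow_le_fact_exp x m : 0 <= x -> x ^ m <= INR (fact m) * exp x.
Proof.
  intros Hx. pose proof (exp_ge_taylor x m Hx) as H.
  assert (Hf : 0 < INR (fact m)) by (apply lt_0_INR, lt_O_fact).
  assert (T : x ^ m / INR (fact m) <= exp x).
  { eapply Rle_trans; [|exact H]. destruct m.
    - simpl. lra.
    - rewrite tech5. assert (0 <= sum_f_R0 (fun k => x ^ k / INR (fact k)) m).
      { apply cond_pos_sum. intro k. apply Rmult_le_pos. apply pow_le; lra. apply Rlt_le, Rinv_0_lt_compat, lt_0_INR, lt_O_fact. }
      lra. }
  apply Rmult_le_reg_r with (/ INR (fact m)). apply Rinv_0_lt_compat; lra.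
  rewrite (Rmult_comm (INR (fact m))), Rmult_assoc, Rinv_r, Rmult_1_r by lra. exact T.
Qed.

Fixpoint Esum (N : nat) (t : R) : R := match N with O => 0 | S N => Esum N t + exp (- (INR (S N) * t)) end.

Lemma Esum_closed N t : (exp t - 1) * Esum N t = 1 - exp (- (INR N * t)).
Proof.
  induction N as [|N IH].
  - simpl. rewrite Rmult_0_l, Ropp_0, exp_0. ring.
  - change (Esum (S N) t) with (Esum N t + exp (- (INR (S N) * t))).
    rewrite Rmult_plus_distr_l, IH. rewrite S_INR.
    replace (- (INR N * t)) with (t + - ((INR N + 1) * t)) by ring. rewrite exp_plus. ring.
Qed.

Fixpoint JS (j N : nat) (a b : R) : R := match N with O => 0 | S N => JS j N a b + (Jn j (S N) b - Jn j (S N) a) end.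

Lemma cont_sse j n t : continuous (fun t => ss (2 * j) t * exp (- (INR n * t))) t.
Proof. apply cont_smooth. auto_derive. exact (ex_ss _ _). Qed.


Lemma JS_int j N a b : 0 <= a ->
  @eq R (RInt (fun t => ss (2 * j) t * Esum N t) a b) (JS j N a b).
Proof.
  intros Ha. induction N as [|N IH].
  - simpl. rewrite (RInt_ext_R _ (fun _ => 0)). rewrite RInt_const. simpl. unfold scal; simpl. unfold mult; simpl. ring.
    intros; ring.
  - change (JS j (S N) a b) with (JS j N a b + (Jn j (S N) b - Jn j (S N) a)). rewrite <- IH.
    rewrite (RInt_ext_R (fun t => ss (2 * j) t * Esum (S N) t) (fun t => ss (2 * j) t * Esum N t + ss (2 * j) t * exp (- (INR (S N) * t)))).
    2: { intros. change (Esum (S N) x) with (Esum N x + exp (- (INR (S N) * x))). ring. }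
    assert (CE : forall N x, continuous (fun t => ss (2 * j) t * Esum N t) x).
    { clear. intros N. induction N as [|N IH]; intro x.
      - apply (continuous_ext (fun _ => 0)). intro; simpl; symmetry; apply Rmult_0_r. apply continuous_const.
      - apply (continuous_ext (fun t => ss (2 * j) t * Esum N t + ss (2 * j) t * exp (- (INR (S N) * t)))).
        intro t. change (Esum (S N) t) with (Esum N t + exp (- (INR (S N) * t))). symmetry; apply Rmult_plus_distr_l.
        apply (continuous_plus (fun t => ss (2 * j) t * Esum N t) (fun t => ss (2 * j) t * exp (- (INR (S N) * t)))).
        apply IH. apply cont_sse. }
    rewrite RInt_plus_R. 2: apply cont_ex, CE. 2: apply cont_ex; intro; apply cont_sse.
    unfold Jn.
    assert (Ch : @eq R (RInt (fun t => ss (2 * j) t * exp (- (INR (S N) * t))) 0 a + RInt (fun t => ss (2 * j) t * exp (- (INR (S N) * t))) a b)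
       (RInt (fun t => ss (2 * j) t * exp (- (INR (S N) * t))) 0 b)).
    { apply (RInt_Chasles (V:=R_CompleteNormedModule)); apply cont_ex; intro; apply cont_sse. }
    rewrite <- Ch. ring.
Qed.

Lemma Jn_small j n a : 0 <= a <= 1 -> Rabs (Jn j n a) <= a * (PI + 1) ^ (2 * j).
Proof.
  intros Ha. pose proof PIb. unfold Jn.
  replace (a * (PI + 1) ^ (2 * j)) with ((a - 0) * (PI + 1) ^ (2 * j)) by ring.
  apply abs_RInt_le_const. lra. apply cont_ex; intro; apply cont_sse.
  intros t Ht. rewrite Rabs_mult, (Rabs_right (exp _)) by (apply Rle_ge, Rlt_le, exp_pos).
  destruct (cs_bound1 (2 * j) t ltac:(lra)) as [_ Hs].
  assert (exp (- (INR n * t)) <= 1) by (rewrite <- exp_0; apply exp_mono; pose proof (pos_INR n); nra).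
  assert ((PI + t) ^ (2 * j) <= (PI + 1) ^ (2 * j)) by (apply pow_incr; lra).
  pose proof (exp_pos (- (INR n * t))). pose proof (Rabs_pos (ss (2 * j) t)). nra.
Qed.

Lemma JS_est j N a b : 0 <= a <= 1 -> 0 <= b ->
  Rabs (JS j N a b - Tsum j N) <= INR N * (Bj j * exp (- b) * (PI + b) ^ (2 * j) + a * (PI + 1) ^ (2 * j)).
Proof.
  intros Ha Hb. induction N as [|N IH].
  - simpl. replace (0 - 0) with 0 by ring. rewrite Rabs_R0. lra.
  - change (JS j (S N) a b) with (JS j N a b + (Jn j (S N) b - Jn j (S N) a)).
    change (Tsum j (S N)) with (Tsum j N + (-1) ^ (S N) * gam j (S N)).
    replace (JS j N a b + (Jn j (S N) b - Jn j (S N) a) - (Tsum j N + (-1) ^ S N * gam j (S N)))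
      with ((JS j N a b - Tsum j N) + (Jn j (S N) b - (-1) ^ S N * gam j (S N)) - Jn j (S N) a) by ring.
    eapply Rle_trans. apply tri3.
    pose proof (Jbound j (S N) b ltac:(lia) Hb). pose proof (Jn_small j (S N) a Ha).
    rewrite S_INR. lra.
Qed.

Lemma Rem_est j N a b : (2 <= N)%nat -> 0 < a <= b ->
  Rabs (RInt (fun t => ss (2 * j) t * exp (- (INR N * t)) / (exp t - 1)) a b)
    <= INR (2 * j) * INR (fact (2 * j)) * exp PI / (INR N - 1).
Proof.
  intros HN Hab. pose proof PIb.
  assert (HN1 : 1 <= INR N - 1) by (assert (2 <= INR N) by (apply (le_INR 2); lia); lra).
  set (C := INR (2 * j) * INR (fact (2 * j)) * exp PI).
  assert (HC : 0 <= C) by (unfold C; pose proof (pos_INR (2 * j)); pose proof (pos_INR (fact (2 * j))); pose proof (exp_pos PI); apply Rmult_le_pos; [apply Rmult_le_pos|]; lra).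
  set (c := INR N - 1).
  assert (Cf : forall t, 0 < t -> continuous (fun t => ss (2 * j) t * exp (- (INR N * t)) / (exp t - 1)) t).
  { intros t Ht. apply cont_smooth. auto_derive. split. exact (ex_ss _ _). pose proof (exp_ineq1 t ltac:(lra)). split; [lra|exact I].
    }
  assert (Ef : ex_RInt (fun t => ss (2 * j) t * exp (- (INR N * t)) / (exp t - 1)) a b).
  { apply (ex_RInt_continuous (V:=R_CompleteNormedModule)). intros z Hz. rewrite Rmin_left, Rmax_right in Hz by lra. apply Cf. lra. }
  assert (Eg : forall u v, ex_RInt (fun t => C * exp (- (c * t))) u v).
  { intros. apply cont_ex. intro. apply cont_smooth. auto_derive. auto. }
  eapply Rle_trans. apply abs_RInt_le. lra. exact Ef.
  eapply Rle_trans. apply (RInt_le _ (fun t => C * exp (- (c * t)))). lra.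
  - apply (ex_RInt_continuous (V:=R_CompleteNormedModule)). intros z Hz. rewrite Rmin_left, Rmax_right in Hz by lra.
    apply (continuous_comp _ Rabs). apply Cf; lra. apply continuous_Rabs.
  - apply Eg.
  - intros t Ht. 
    assert (Ht0 : 0 < t) by lra.
    pose proof (exp_ineq1 t ltac:(lra)) as He.
    pose proof (ss_bound (2 * j) t ltac:(lra)) as Hs.
    pose proof (pow_le_fact_exp (PI + t) (2 * j) ltac:(lra)) as Hp.
    unfold Rdiv. rewrite !Rabs_mult, Rabs_inv, (Rabs_right (exp _)), (Rabs_right (exp t - 1)) by (try apply Rle_ge, Rlt_le, exp_pos; lra).
    rewrite exp_plus in Hp.
    assert (E1 : exp (- (INR N * t)) * exp t = exp (- (c * t))).
    { rewrite <- exp_plus. f_equal. unfold c. ring. }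
    assert (Hq : t * / (exp t - 1) <= 1).
    { apply Rmult_le_reg_r with (exp t - 1). lra. rewrite Rmult_assoc, Rinv_l, Rmult_1_r; lra. }
    assert (0 < / (exp t - 1)) by (apply Rinv_0_lt_compat; lra).
    pose proof (exp_pos (- (INR N * t))). pose proof (exp_pos t). pose proof (exp_pos PI).
    pose proof (pos_INR (2 * j)).
    assert (0 <= (PI + t) ^ (2 * j)) by (apply pow_le; lra).
    apply Rle_trans with (INR (2 * j) * t * (PI + t) ^ (2 * j) * exp (- (INR N * t)) * / (exp t - 1)).
    { apply Rmult_le_compat_r. lra. apply Rmult_le_compat_r. lra. exact Hs. }
    apply Rle_trans with (INR (2 * j) * (PI + t) ^ (2 * j) * exp (- (INR N * t))).
    { replace (INR (2 * j) * t * (PI + t) ^ (2 * j) * exp (- (INR N * t)) * / (exp t - 1))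
        with (INR (2 * j) * (PI + t) ^ (2 * j) * exp (- (INR N * t)) * (t * / (exp t - 1))) by ring.
      rewrite <- (Rmult_1_r (INR (2 * j) * (PI + t) ^ (2 * j) * exp (- (INR N * t)))) at 2.
      apply Rmult_le_compat_l. apply Rmult_le_pos; [apply Rmult_le_pos|]; lra. exact Hq. }
    unfold C. rewrite <- E1.
    replace (INR (2 * j) * INR (fact (2 * j)) * exp PI * (exp (- (INR N * t)) * exp t))
      with (INR (2 * j) * (INR (fact (2 * j)) * (exp PI * exp t)) * exp (- (INR N * t))) by ring.
    apply Rmult_le_compat_r. lra. apply Rmult_le_compat_l. lra. exact Hp.
  -
    pose proof (ftc_lin (fun t => C * exp (- (c * t))) (fun _ => 0) (fun t => - C * exp (- (c * t)) / c) 0 a b) as H0.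
    assert (Hc0 : 0 < c) by (unfold c; lra).
    match goal with |- ?L <= _ => replace L with (L + 0 * RInt (fun _ : R => 0) a b) by ring end.
    rewrite H0; cbv beta.
    + assert (exp (- (c * b)) > 0) by apply exp_pos.
      assert (exp (- (c * a)) <= 1) by (rewrite <- exp_0; apply exp_mono; nra).
      apply Rle_trans with (C * exp (- (c * a)) / c). 
      { unfold Rdiv. assert (0 <= C * exp (- (c * b)) * / c) by (apply Rmult_le_pos; [apply Rmult_le_pos|]; try lra; apply Rlt_le, Rinv_0_lt_compat; lra). nra. }
      unfold Rdiv. apply Rmult_le_compat_r. apply Rlt_le, Rinv_0_lt_compat; lra.
      rewrite <- (Rmult_1_r C) at 2. apply Rmult_le_compat_l; lra.
    + intro x. auto_derive. auto. field. lra.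
    + intros. apply cont_smooth. auto_derive. auto.
    + intros. apply cont_smooth. auto_derive. auto.
Qed.

Theorem lemma1 (j : nat) :
  improper_integral_0_inf
    (fun t => (PI ^ 2 + t ^ 2) ^ j / (exp t - 1)
              * sin (2 * INR j * atan (t / PI)))
    (INR j * PI ^ (2 * j + 1) / (2 * INR j + 1)).
Proof.
  set (f := fun t => (PI ^ 2 + t ^ 2) ^ j / (exp t - 1) * sin (2 * INR j * atan (t / PI))).
  set (h := fun t => ss (2 * j) t / (exp t - 1)).
  assert (Hfh : forall t, 0 < t -> f t = h t) by (intros t Ht; unfold f, h; apply integrand_eq; lra).
  assert (Hh : forall a b, 0 < a -> a <= b -> ex_RInt h a b).
  { intros a b Ha Hab. apply (ex_RInt_continuous (V:=R_CompleteNormedModule)). intros z Hz.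
    rewrite Rmin_left, Rmax_right in Hz by lra. apply cont_smooth. unfold h. auto_derive.
    split. exact (ex_ss _ _). pose proof (exp_ineq1 z ltac:(lra)). split; [lra|exact I]. }
  assert (Hf : forall a b, 0 < a -> a <= b -> ex_RInt f a b).
  { intros a b Ha Hab. apply (ex_RInt_ext h). intros x Hx. rewrite Rmin_left, Rmax_right in Hx by lra.
    symmetry; apply Hfh; lra. apply Hh; auto. }
  split.
  - intros a b Ha Hab. constructor. apply ex_RInt_Reals_0. apply Hf; auto.
  - intros eps Heps. pose proof PIb.
    set (CR := CRL j). set (C2 := INR (2 * j) * INR (Factorial.fact (2 * j)) * exp PI).
    assert (HCR : 0 <= CR).
    { unfold CR, CRL. pose proof (Lg_pos j). assert (0 <= Bg j) by (eapply Rle_trans; [apply Rabs_pos|apply (Gc_bnd j 0)]). 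
      apply Rmult_le_pos; [|lra]. apply Rmult_le_pos; nra. }
    assert (HC2 : 0 <= C2).
    { unfold C2. pose proof (pos_INR (2 * j)). pose proof (pos_INR (Factorial.fact (2 * j))). pose proof (exp_pos PI).
      apply Rmult_le_pos; [apply Rmult_le_pos|]; lra. }
    destruct (nat_unbounded (3 + 4 * (CR + C2) / eps)) as [N HN].
    assert (HNe : 0 <= 4 * (CR + C2) / eps) by (apply Rmult_le_pos; [lra|apply Rlt_le, Rinv_0_lt_compat; lra]).
    assert (HN2 : (2 <= N)%nat).
    { destruct (Compare_dec.le_lt_dec 2 N) as [l|l]; auto. assert (INR N <= 1) by (apply (le_INR N 1); lia). lra. }
    assert (HN1 : CR + C2 <= eps / 4 * (INR N - 1)).
    { assert (4 * (CR + C2) / eps <= INR N - 1) by lra.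
      apply Rmult_le_compat_l with (r := eps / 4) in H0; [|lra].
      replace (eps / 4 * (4 * (CR + C2) / eps)) with (CR + C2) in H0 by (field; lra). lra. }
    set (K1 := INR N * (PI + 1) ^ (2 * j)).
    assert (HK1 : 0 <= K1) by (unfold K1; apply Rmult_le_pos; [apply pos_INR|apply pow_le; lra]).
    set (K2 := INR N * Bj j * INR (Factorial.fact (2 * j + 1)) * exp PI).
    assert (HK2 : 0 <= K2).
    { unfold K2. pose proof (pos_INR N). pose proof (Bj_pos j). pose proof (pos_INR (Factorial.fact (2 * j + 1))). pose proof (exp_pos PI).
      apply Rmult_le_pos; [apply Rmult_le_pos; [apply Rmult_le_pos|]|]; lra. }
    exists (Rmin 1 (eps / (4 * (K1 + 1)))). split.
    { apply Rmin_pos. lra. apply Rdiv_lt_0_compat; lra. }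
    exists (4 * K2 / eps + 1). intros a b pr Ha Had Hb Hab.
    assert (Ha1 : a <= 1) by (pose proof (Rmin_l 1 (eps / (4 * (K1 + 1)))); lra).
    assert (Ha2 : a < eps / (4 * (K1 + 1))) by (pose proof (Rmin_r 1 (eps / (4 * (K1 + 1)))); lra).
    assert (HMe : 0 <= 4 * K2 / eps) by (apply Rmult_le_pos; [lra|apply Rlt_le, Rinv_0_lt_compat; lra]).
    assert (Hb0 : 0 < b) by lra.
    rewrite <- RInt_Reals.
    assert (Hdec : @eq R (RInt f a b) (JS j N a b + RInt (fun t => ss (2 * j) t * exp (- (INR N * t)) / (exp t - 1)) a b)).
    { rewrite <- (JS_int j N a b) by lra.
      rewrite (RInt_ext_R f (fun t => ss (2 * j) t * Esum N t + ss (2 * j) t * exp (- (INR N * t)) / (exp t - 1))).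
      apply RInt_plus_R.
      - apply (ex_RInt_ext (fun t => h t - ss (2 * j) t * exp (- (INR N * t)) / (exp t - 1))).
        + intros x Hx. rewrite Rmin_left, Rmax_right in Hx by lra.
          pose proof (exp_ineq1 x ltac:(lra)). pose proof (Esum_closed N x).
          assert (Esum N x = (1 - exp (- (INR N * x))) / (exp x - 1)) as ->. { rewrite <- H1. field. lra. }
          match goal with |- ?u = ?v => change (@eq R u v) end.
          unfold h. field. lra.
        + apply (ex_RInt_minus (V:=R_NormedModule)). apply Hh; lra.
          apply (ex_RInt_continuous (V:=R_CompleteNormedModule)). intros z Hz.
          rewrite Rmin_left, Rmax_right in Hz by lra. apply cont_smooth. auto_derive.
          split. exact (ex_ss _ _). pose proof (exp_ineq1 z ltac:(lra)). split; [lra|exact I].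
      - apply (ex_RInt_continuous (V:=R_CompleteNormedModule)). intros z Hz.
        rewrite Rmin_left, Rmax_right in Hz by lra. apply cont_smooth. auto_derive.
        split. exact (ex_ss _ _). pose proof (exp_ineq1 z ltac:(lra)). split; [lra|exact I].
      - intros x Hx. rewrite Rmin_left, Rmax_right in Hx by lra. rewrite Hfh by lra. unfold h.
        pose proof (exp_ineq1 x ltac:(lra)). pose proof (Esum_closed N x).
        apply Rmult_eq_reg_l with (exp x - 1). 2: lra.
        replace ((exp x - 1) * (ss (2 * j) x * Esum N x + ss (2 * j) x * exp (- (INR N * x)) / (exp x - 1)))
          with (ss (2 * j) x * ((exp x - 1) * Esum N x) + ss (2 * j) x * exp (- (INR N * x))) by (field; lra).
        rewrite H1. field. lra. }
    rewrite Hdec. fold (target j).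
    set (Rm := RInt (fun t => ss (2 * j) t * exp (- (INR N * t)) / (exp t - 1)) a b).
    pose proof (JS_est j N a b ltac:(lra) ltac:(lra)) as E1.
    pose proof (Tsum_est j N ltac:(lia)) as E2.
    pose proof (Rem_est j N a b HN2 ltac:(lra)) as E3. fold Rm in E3. fold C2 in E3.
    replace (JS j N a b + Rm - target j) with ((JS j N a b - Tsum j N) + (Tsum j N - target j) + Rm) by ring.
    assert (HNm : 1 <= INR N - 1) by (assert (2 <= INR N) by (apply (le_INR 2); lia); lra).
    assert (P1 : INR N * (Bj j * exp (- b) * (PI + b) ^ (2 * j)) < eps / 4).
    { pose proof (pow_le_fact_exp (PI + b) (2 * j + 1) ltac:(lra)) as Hp.
      rewrite exp_plus in Hp. replace (2 * j + 1)%nat with (S (2 * j)) in Hp by lia. rewrite <- tech_pow_Rmult in Hp.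
      replace (S (2 * j)) with (2 * j + 1)%nat in Hp by lia.
      assert (Hx : exp (- b) * (PI + b) ^ (2 * j) <= INR (Factorial.fact (2 * j + 1)) * exp PI / (PI + b)).
      { apply Rmult_le_reg_r with (PI + b). lra.
        replace (INR (Factorial.fact (2 * j + 1)) * exp PI / (PI + b) * (PI + b)) with (INR (Factorial.fact (2 * j + 1)) * exp PI) by (field; lra).
        apply Rmult_le_reg_l with (exp b). apply exp_pos.
        replace (exp b * (exp (- b) * (PI + b) ^ (2 * j) * (PI + b))) with ((PI + b) * (PI + b) ^ (2 * j) * (exp b * exp (- b))) by ring.
        rewrite <- exp_plus, Rplus_opp_r, exp_0. rewrite Rmult_1_r. replace (exp b * (INR (Factorial.fact (2 * j + 1)) * exp PI)) with (INR (Factorial.fact (2 * j + 1)) * (exp PI * exp b)) by ring. exact Hp. }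
      assert (Hy : INR N * (Bj j * exp (- b) * (PI + b) ^ (2 * j)) <= K2 / (PI + b)).
      { unfold K2. pose proof (pos_INR N). pose proof (Bj_pos j).
        replace (INR N * (Bj j * exp (- b) * (PI + b) ^ (2 * j))) with (INR N * Bj j * (exp (- b) * (PI + b) ^ (2 * j))) by ring.
        replace (INR N * Bj j * INR (Factorial.fact (2 * j + 1)) * exp PI / (PI + b)) with (INR N * Bj j * (INR (Factorial.fact (2 * j + 1)) * exp PI / (PI + b))) by (field; lra).
        apply Rmult_le_compat_l. nra. exact Hx. }
      eapply Rle_lt_trans. exact Hy.
      apply Rmult_lt_reg_r with (PI + b). lra. unfold Rdiv. rewrite Rmult_assoc, Rinv_l, Rmult_1_r by lra.
      assert (4 * K2 / eps < b) by lra.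
      apply Rmult_lt_compat_l with (r := eps / 4) in H0; [|lra].
      replace (eps / 4 * (4 * K2 / eps)) with K2 in H0 by (field; lra).
      nra. }
    assert (P2 : INR N * (a * (PI + 1) ^ (2 * j)) < eps / 4).
    { replace (INR N * (a * (PI + 1) ^ (2 * j))) with (a * K1) by (unfold K1; ring).
      apply Rle_lt_trans with (eps / (4 * (K1 + 1)) * K1). apply Rmult_le_compat_r; lra.
      apply Rmult_lt_reg_r with (4 * (K1 + 1)). lra.
      replace (eps / (4 * (K1 + 1)) * K1 * (4 * (K1 + 1))) with (eps * K1) by (field; lra). nra. }
    assert (P3 : CR / (INR N + 1 / 2) + C2 / (INR N - 1) <= eps / 4).
    { apply Rle_trans with (CR / (INR N - 1) + C2 / (INR N - 1)).
      apply Rplus_le_compat_r. unfold Rdiv. apply Rmult_le_compat_l. lra. apply Rinv_le_contravar; lra.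
      replace (CR / (INR N - 1) + C2 / (INR N - 1)) with ((CR + C2) / (INR N - 1)) by (field; lra).
      apply Rmult_le_reg_r with (INR N - 1). lra. unfold Rdiv. rewrite Rmult_assoc, Rinv_l, Rmult_1_r by lra. lra. }
    eapply Rle_lt_trans. apply Rabs_triang.
    eapply Rle_lt_trans. apply Rplus_le_compat_r. apply Rabs_triang.
    fold CR in E2. lra.
Qed.
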